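(* Let $\mathbb{K}$ be a non-Archimedean valued field and let $G$ be a discrete group. Then $G$ is normed $\mathbb{K}$-amenable if and only if $H^n_b(G, E) = 0$ for every dual normed $\mathbb{K}[G]$-module $E$ and all $n \geq 1$.
   Context: A non-Archimedean valued field is a field $\mathbb{K}$ with a map $|\cdot|_\mathbb{K}:\mathbb{K}\to\mathbb{R}_{\ge 0}$ with $|x|_\mathbb{K}=0$ iff $x=0$, $|x+y|_\mathbb{K}\le\max\{|x|_\mathbb{K},|y|_\mathbb{K}\}$, $|xy|_\mathbb{K}=|x|_\mathbb{K}|y|_\mathbb{K}$ (not assumed complete). A normed $\mathbb{K}$-vector space is a $\mathbb{K}$-vector space $E$ with a norm $\|\cdot\|$ satisfying $\|x\|=0$ iff $x=0$, the ultrametric inequality $\|x+y\|\le\max\{\|x\|,\|y\|\}$, and $\|\alpha x\|=|\alpha|_\mathbb{K}\|x\|$ (the norm need not take values in $|\mathbb{K}|_\mathbb{K}$). A normed $\mathbb{K}[G]$-module is a normed $\mathbb{K}$-vector space on which $G$ acts by linear isometries (no continuity required). For normed spaces, the topological dual $E^*$ carries the operator norm $\|T\|_{op}=\inf\{C\ge 0: |Tx|_\mathbb{K}\le C\|x\|\ \forall x\}$, and if $E$ is a normed $\mathbb{K}[G]$-module, $E^*$ is one with $(g\cdot\lambda)(x)=\lambda(g^{-1}x)$. A dual normed $\mathbb{K}[G]$-module is one isometrically $G$-isomorphic to the dual of a normed $\mathbb{K}[G]$-module. For a discrete group $G$ and normed $\mathbb{K}[G]$-module $E$, let $C^n_b(G,E)$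 be the space of bounded maps $G^{n+1}\to E$, with $G$-action $(g\cdot f)(g_0,\dots,g_n)=g\cdot f(g^{-1}g_0,\dots,g^{-1}g_n)$ and coboundary $\delta^n f(g_0,\dots,g_{n+1})=\sum_{i=0}^{n+1}(-1)^i f(g_0,\dots,\widehat{g_i},\dots,g_{n+1})$. The bounded cohomology $H^\bullet_b(G,E)$ is the cohomology of the subcomplex of $G$-invariants $C^\bullet_b(G,E)^G$. For a group $G$ (here discrete), $C_b(G,\mathbb{K})$ denotes bounded (continuous) functions $G\to\mathbb{K}$ with the sup norm, with $G$ acting by $(g\cdot f)(x)=f(g^{-1}x)$. A normed $\mathbb{K}$-mean on $G$ is a bounded linear map $m:C_b(G,\mathbb{K})\to\mathbb{K}$ with $m(\mathbbm{1}_G)=1$; it is left-invariant if $m(g\cdot f)=m(f)$ for all $g,f$. $G$ is normed $\mathbb{K}$-amenable if it admits a left-invariant normed $\mathbb{K}$-mean. *)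

(* Defs.v *)
From HB Require Import structures.
From mathcomp Require Import all_boot all_order all_algebra.
From mathcomp Require Import boolp classical_sets reals.
Set Implicit Arguments. Unset Strict Implicit. Unset Printing Implicit Defensive.
Import Order.TTheory GRing.Theory Num.Theory.
Local Open Scope ring_scope.
Local Open Scope classical_set_scope.

Section Defs.
Variable R : realType.

Definition is_na_abs (K : fieldType) (absK : K -> R) : Prop :=
  [/\ forall x, 0 <= absK x,
      forall x, absK x = 0 <-> x = 0,
      forall x y, absK (x + y) <= Num.max (absK x) (absK y) &
      forall x y, absK (x * y) = absK x * absK y].

Record group_str (G : Type) := GroupStr {
  gmul : G -> G -> G;
  ginv : G -> G;
  gone : G;
  gmulA : forall x y z, gmul x (gmul y z) = gmul (gmul x y) z;
  gmul1 : forall x, gmul gone x = x;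
  gmulV : forall x, gmul (ginv x) x = gone }.

Variable K : fieldType.
Variable absK : K -> R.

Definition is_na_norm (E : lmodType K) (nE : E -> R) : Prop :=
  [/\ forall x, 0 <= nE x,
      forall x, nE x = 0 <-> x = 0,
      forall x y, nE (x + y) <= Num.max (nE x) (nE y) &
      forall (a : K) x, nE (a *: x) = absK a * nE x].

Variable G : Type.
Variable grp : group_str G.

Definition normed_KG_module (E : lmodType K) (nE : E -> R) (act : G -> E -> E)
  : Prop :=
  [/\ is_na_norm nE,
      forall g (a : K) x y, act g (a *: x + y) = a *: act g x + act g y,
      forall g x, nE (act g x) = nE x,
      forall x, act (gone grp) x = x &
      forall g h x, act (gmul grp g h) x = act g (act h x)].

Definition lin_functional (F : lmodType K) (l : F -> K) : Prop :=
  forall (a : K) x y, l (a *: x + y) = a * l x + l y.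

Definition bounded_functional (F : lmodType K) (nF : F -> R) (l : F -> K)
  : Prop := exists C : R, forall x, absK (l x) <= C * nF x.

Definition opnorm (F : lmodType K) (nF : F -> R) (l : F -> K) : R :=
  inf [set C : R | 0 <= C /\ forall x, absK (l x) <= C * nF x].

(* E is a dual normed K[G]-module: isometrically G-isomorphic (via Phi)
   to the topological dual F^* of some normed K[G]-module F, where
   F^* = bounded linear functionals with the operator norm and the
   contragredient action (g.l)(x) = l(g^-1 x). *)
Definition dual_KG_module (E : lmodType K) (nE : E -> R) (actE : G -> E -> E)
  : Prop :=
  normed_KG_module nE actE /\
  exists (F : lmodType K) (nF : F -> R) (actF : G -> F -> F) (Phi : E -> F -> K),
  normed_KG_module nF actF /\
      (forall e, lin_functional (Phi e) /\ bounded_functional nF (Phi e)) /\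
      (forall (a : K) e1 e2,
        Phi (a *: e1 + e2) = (fun x => a * Phi e1 x + Phi e2 x)) /\
      (forall e1 e2, Phi e1 = Phi e2 -> e1 = e2) /\
      (forall l : F -> K, lin_functional l -> bounded_functional nF l ->
        exists e, Phi e = l) /\
      (forall e, nE e = opnorm nF (Phi e)) /\
      (forall g e, Phi (actE g e) = (fun x => Phi e (actF (ginv grp g) x))).

(* bounded cohomology: homogeneous cochains G^{n+1} -> E *)
Section Cohom.
Variables (E : lmodType K) (nE : E -> R) (actE : G -> E -> E).

Definition cochain (n : nat) := ('I_n.+1 -> G) -> E.

Definition bounded_cochain n (f : cochain n) : Prop :=
  exists C : R, forall x, nE (f x) <= C.

Definition invariant_cochain n (f : cochain n) : Prop :=
  forall g x, actE g (f (fun i => gmul grp (ginv grp g) (x i))) = f x.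

Definition bcochain n (f : cochain n) : Prop :=
  bounded_cochain f /\ invariant_cochain f.

Definition coboundary n (f : cochain n) : cochain n.+1 :=
  fun x => \sum_(i < n.+2) ((-1) ^+ i : K) *: f (fun j => x (lift i j)).

Definition Hb_vanishes (n : nat) : Prop :=
  match n with
  | 0 => forall f : cochain 0, bcochain f -> coboundary f = (fun _ => 0) ->
           f = (fun _ => 0)
  | m.+1 => forall f : cochain m.+1, bcochain f ->
           coboundary f = (fun _ => 0) ->
           exists h : cochain m, bcochain h /\ coboundary h = f
  end.
End Cohom.

Definition bounded_fun (f : G -> K) : Prop := exists C : R, forall x, absK (f x) <= C.

Definition supnorm (f : G -> K) : R := sup [set absK (f x) | x in [set: G]].

Definition left_inv_normed_mean (m : (G -> K) -> K) : Prop :=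
  [/\ forall (a : K) f1 f2, bounded_fun f1 -> bounded_fun f2 ->
        m (fun x => a * f1 x + f2 x) = a * m f1 + m f2,
      exists C : R, forall f, bounded_fun f -> absK (m f) <= C * supnorm f,
      m (fun _ => 1) = 1 &
      forall g f, bounded_fun f -> m (fun x => f (gmul grp (ginv grp g) x)) = m f].

Definition normed_amenable : Prop := exists m, left_inv_normed_mean m.

End Defs.

(* Main.v *)
Require Import Defs.
From HB Require Import structures.
From mathcomp Require Import all_boot all_order all_algebra.
From mathcomp Require Import boolp classical_sets reals.
From mathcomp Require Import ring.
Set Implicit Arguments. Unset Strict Implicit. Unset Printing Implicit Defensive.
Import Order.TTheory GRing.Theory Num.Theory.
Local Open Scope ring_scope.
Local Open Scope classical_set_scope.
Lemma maxle2 (R : realType) (a b c d : R) : a <= c -> b <= d -> Num.max a b <= Num.max c d.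
Proof. by move=> h1 h2; rewrite ge_max !le_max h1 h2 orbT. Qed.

Section AbsL.
Variables (R : realType) (K : fieldType) (absK : K -> R) (hK : is_na_abs absK).

Lemma abs_ge0 x : 0 <= absK x. Proof. by case: hK. Qed.
Lemma abs0 : absK 0 = 0. Proof. by case: hK => _ h _ _; apply: (proj2 (h 0)). Qed.
Lemma abs_eq0 x : absK x = 0 -> x = 0. Proof. by case: hK => _ h _ _; apply: (proj1 (h x)). Qed.
Lemma absM x y : absK (x * y) = absK x * absK y. Proof. by case: hK. Qed.
Lemma absD x y : absK (x + y) <= Num.max (absK x) (absK y). Proof. by case: hK. Qed.
Lemma abs1 : absK 1 = 1.
Proof.
have h := absM 1 1; rewrite mulr1 in h.
have nz : absK 1 != 0 by apply/eqP => /abs_eq0/eqP; rewrite oner_eq0.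
by apply: (mulIf nz); rewrite mul1r -h.
Qed.
Lemma absN1 : absK (-1) = 1.
Proof.
have h := absM (-1) (-1); rewrite mulrNN mulr1 abs1 in h.
have : absK (-1) ^+ 2 == 1 by rewrite expr2 -h.
rewrite sqrf_eq1 => /orP [/eqP //|/eqP e].
by have := abs_ge0 (-1); rewrite e ler0N1.
Qed.
Lemma absN x : absK (- x) = absK x.
Proof. by rewrite -mulN1r absM absN1 mul1r. Qed.
Lemma abs_sign i : absK ((-1) ^+ i) = 1.
Proof. elim: i => [|i IH]; first by rewrite expr0 abs1. by rewrite exprS absM IH absN1 mulr1. Qed.
Lemma absB x y : absK (x - y) <= Num.max (absK x) (absK y).
Proof. by rewrite -(absN y) absD. Qed.

Lemma bounded_lin (G : Type) (a : K) (f1 f2 : G -> K) : bounded_fun absK f1 -> bounded_fun absK f2 ->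
  bounded_fun absK (fun x => a * f1 x + f2 x).
Proof.
move=> [C1 h1] [C2 h2]; exists (Num.max (absK a * C1) C2) => x.
apply: le_trans (absD _ _) _; apply: maxle2 => //.
by rewrite absM ler_wpM2l ?abs_ge0.
Qed.

Lemma bounded_cst (G : Type) (c : K) : bounded_fun absK (fun _ : G => c).
Proof. by exists (absK c). Qed.

Lemma bounded_sum (G I : Type) (r : seq I) (c : I -> K) (phi : I -> G -> K) :
  (forall i, bounded_fun absK (phi i)) ->
  bounded_fun absK (fun g => \sum_(i <- r) c i * phi i g).
Proof.
move=> hb; elim: r => [|a r IH].
  by exists 0 => x; rewrite big_nil abs0.
have := bounded_lin (c a) (hb a) IH.
by move=> [C hC]; exists C => x; rewrite big_cons.
Qed.

Section Sup.
Variables (G : Type) (x0 : G).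
Lemma sup_ub (f : G -> K) x : bounded_fun absK f -> absK (f x) <= supnorm absK f.
Proof.
move=> [C hC]; apply: ub_le_sup; last by exists x.
by exists C => _ [y _ <-].
Qed.
Lemma sup_le (f : G -> K) D : (forall x, absK (f x) <= D) -> supnorm absK f <= D.
Proof. by move=> h; apply: ge_sup; [exists (absK (f x0)), x0|move=> _ [y _ <-]]. Qed.
Lemma sup_ge0 (f : G -> K) : bounded_fun absK f -> 0 <= supnorm absK f.
Proof. by move=> hb; apply: le_trans (abs_ge0 _) (sup_ub x0 hb). Qed.
End Sup.

Section Opn.
Variables (F : lmodType K) (nF : F -> R) (hF : is_na_norm absK nF).
Lemma nF_ge0 x : 0 <= nF x. Proof. by case: hF. Qed.
Lemma nF_eq0 x : nF x = 0 -> x = 0. Proof. by case: hF => _ h _ _; apply: (proj1 (h x)). Qed.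
Lemma lin0 (l : F -> K) : lin_functional l -> l 0 = 0.
Proof.
move=> hl; have := hl 1 0 0; rewrite scaler0 addr0 mul1r => h.
by apply: (addrI (l 0)); rewrite addr0 -h.
Qed.

Lemma opnorm_mem (l : F -> K) : bounded_functional absK nF l ->
  [set C : R | 0 <= C /\ forall x, absK (l x) <= C * nF x] !=set0.
Proof.
move=> [C hC]; exists (Num.max C 0); split; first by rewrite le_max lexx orbT.
move=> x; apply: le_trans (hC x) _; apply: ler_wpM2r; first exact: nF_ge0.
by rewrite le_max lexx.
Qed.

Lemma opnorm_ub (l : F -> K) x : lin_functional l -> bounded_functional absK nF l ->
  absK (l x) <= opnorm absK nF l * nF x.
Proof.
move=> hl hb.
have [e0|nz] := eqVneq (nF x) 0.
  by rewrite e0 mulr0 (nF_eq0 e0) lin0 // abs0.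
have pos : 0 < nF x by rewrite lt_def nz nF_ge0.
rewrite -ler_pdivrMr //; apply: lb_le_inf; first exact: opnorm_mem.
by move=> C [_ hC]; rewrite ler_pdivrMr.
Qed.

Lemma opnorm_le (l : F -> K) D : 0 <= D -> (forall x, absK (l x) <= D * nF x) ->
  opnorm absK nF l <= D.
Proof.
move=> D0 hD; apply: ge_inf; last by split.
by exists 0 => C [].
Qed.

Lemma opnorm_ge0 (l : F -> K) : bounded_functional absK nF l -> 0 <= opnorm absK nF l.
Proof. by move=> hb; apply: lb_le_inf; [exact: opnorm_mem| move=> C []]. Qed.
End Opn.
End AbsL.

Section Grp.
Variables (G : Type) (grp : group_str G).
Local Notation "x * y" := (gmul grp x y).
Local Notation "x ^-1" := (ginv grp x).
Local Notation e := (gone grp).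
Lemma gmulV' x : x * x^-1 = e.
Proof.
rewrite -(gmul1 grp (x * x^-1)) -{1}(gmulV grp (x^-1)) -gmulA (gmulA grp x^-1).
by rewrite gmulV gmul1 gmulV.
Qed.
Lemma gmul1r x : x * e = x.
Proof. by rewrite -(gmulV grp x) gmulA gmulV' gmul1. Qed.
Lemma ginvK x : (x^-1)^-1 = x.
Proof. by rewrite -[LHS]gmul1r -(gmulV grp x) gmulA gmulV gmul1. Qed.
Lemma gmulKV g x : g^-1 * (g * x) = x.
Proof. by rewrite gmulA gmulV gmul1. Qed.
Lemma gmulVK g x : g * (g^-1 * x) = x.
Proof. by rewrite gmulA gmulV' gmul1. Qed.
Lemma ginvM x y : (x * y)^-1 = y^-1 * x^-1.
Proof.
rewrite -{1}(gmul1 grp ((x * y)^-1)).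
have <- : (y^-1 * x^-1) * (x * y) = e by rewrite -gmulA gmulKV gmulV.
by rewrite -gmulA gmulV' gmul1r.
Qed.
Lemma ginv1 : e^-1 = e.
Proof. by rewrite -{2}(gmulV grp e) gmul1r. Qed.
End Grp.
Definition gcons (G : Type) n (g : G) (y : 'I_n -> G) : 'I_n.+1 -> G :=
  fun i => match unlift ord0 i with None => g | Some j => y j end.

Lemma gcons0 (G : Type) n (g : G) (y : 'I_n -> G) : gcons g y ord0 = g.
Proof. by rewrite /gcons unlift_none. Qed.
Lemma gconsS (G : Type) n (g : G) (y : 'I_n -> G) j : gcons g y (lift ord0 j) = y j.
Proof. by rewrite /gcons liftK. Qed.

Lemma gcons_lift0 (G : Type) n (g : G) (y : 'I_n -> G) :
  (fun j => gcons g y (lift ord0 j)) = y.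
Proof. by apply: funext => j; rewrite gconsS. Qed.

Lemma gcons_liftS (G : Type) n (g : G) (x : 'I_n.+1 -> G) (i : 'I_n.+1) :
  (fun j => gcons g x (lift (lift ord0 i) j)) = gcons g (fun j => x (lift i j)).
Proof.
apply: funext => j; case: (unliftP ord0 j) => [j'|] ->.
  have -> : lift (lift ord0 i) (lift ord0 j') = lift ord0 (lift i j').
    by apply: val_inj; rewrite /= /bump /= !add1n ltnS addnS.
  by rewrite !gconsS.
have -> : lift (lift ord0 i) ord0 = ord0 :> 'I_n.+2 by apply: val_inj.
by rewrite !gcons0.
Qed.

Lemma gcons_map (G : Type) n (g : G) (y : 'I_n -> G) (f : G -> G) :
  (fun i => f (gcons g y i)) = gcons (f g) (fun i => f (y i)).
Proof. by apply: funext => i; rewrite /gcons; case: unlift. Qed.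

Section Forward.
Variables (R : realType) (K : fieldType) (absK : K -> R) (hK : is_na_abs absK)
  (G : Type) (grp : group_str G).

Lemma forward : normed_amenable absK grp ->
  forall (E : lmodType K) (nE : E -> R) (actE : G -> E -> E),
     dual_KG_module absK grp nE actE ->
     forall n : nat, (1 <= n)%N -> Hb_vanishes grp nE actE n.
Proof.
move=> [m [mlin [Cm hCm] m1 minv]] E nE actE
  [hE [F [nF [actF [Phi [hF [hPhi1 [hPhilin [hinj [hsurj [hnorm hact]]]]]]]]]]] [//|k] _.
move=> f [[B hB] finv] fcoc.
have hFn : is_na_norm absK nF by case: hF.
have m0 : m (fun _ => 0) = 0.
  have := mlin 1 _ _ (bounded_cst absK G 0) (bounded_cst absK G 0).
  rewrite mulr0 addr0 mul1r => h.
  by apply: (addrI (m (fun _ => 0))); rewrite addr0 -h.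
have mcst c : m (fun _ => c) = c.
  have := mlin c _ _ (bounded_cst absK G 1) (bounded_cst absK G 0).
  by rewrite mulr1 addr0 m0 addr0 m1 mulr1.
have msum (I : Type) (r : seq I) (c : I -> K) (phi : I -> G -> K) :
    (forall i, bounded_fun absK (phi i)) ->
    m (fun g => \sum_(i <- r) c i * phi i g) = \sum_(i <- r) c i * m (phi i).
  move=> hb; elim: r => [|a r IH].
    rewrite big_nil -[RHS]m0; congr m; apply: funext => g; exact: big_nil.
  rewrite big_cons -IH -mlin; first by congr m; apply: funext => g; rewrite big_cons.
    exact: hb.
  exact: (bounded_sum hK r c hb).
have Cm' : forall phi, bounded_fun absK phi ->
    absK (m phi) <= Num.max Cm 0 * supnorm absK phi.
  move=> phi hb; apply: le_trans (hCm _ hb) _; apply: ler_wpM2r.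
    exact: (sup_ge0 hK (gone grp) hb).
  by rewrite le_max lexx.
have PhiD a e1 e2 z : Phi (a *: e1 + e2) z = a * Phi e1 z + Phi e2 z by rewrite hPhilin.
have Phi0 z : Phi 0 z = 0.
  have := PhiD 1 0 0 z; rewrite scaler0 addr0 mul1r => h.
  by apply: (addrI (Phi 0 z)); rewrite addr0 -h.
have Phisum (I : Type) (r : seq I) (c : I -> K) (e : I -> E) z :
    Phi (\sum_(i <- r) c i *: e i) z = \sum_(i <- r) c i * Phi (e i) z.
  elim: r => [|a r IH]; first by rewrite !big_nil Phi0.
  by rewrite !big_cons PhiD IH.
have Phib e z : absK (Phi e z) <= nE e * nF z.
  rewrite hnorm; apply: (opnorm_ub hK hFn); by case: (hPhi1 e).
have B0 : 0 <= Num.max B 0 by rewrite le_max lexx orbT.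
have fb y z : bounded_fun absK (fun g => Phi (f (gcons g y)) z).
  exists (Num.max B 0 * nF z) => g; apply: le_trans (Phib _ _) _.
  apply: ler_wpM2r; first exact: nF_ge0 hFn z.
  by apply: le_trans (hB _) _; rewrite le_max lexx.
pose l y z := m (fun g => Phi (f (gcons g y)) z).
have llin y : lin_functional (l y).
  move=> a z1 z2; rewrite /l -mlin //; congr m; apply: funext => g.
  by rewrite (proj1 (hPhi1 _)).
have lbd y z : absK (l y z) <= (Num.max Cm 0 * Num.max B 0) * nF z.
  apply: le_trans (Cm' _ (fb y z)) _; rewrite -mulrA; apply: ler_wpM2l.
    by rewrite le_max lexx orbT.
  apply: (sup_le (gone grp)) => g; apply: le_trans (Phib _ _) _.
  apply: ler_wpM2r; first exact: nF_ge0 hFn z.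
  by apply: le_trans (hB _) _; rewrite le_max lexx.
have [h hh] := @choice _ _ (fun y e => Phi e = l y)
  (fun y => hsurj _ (llin y) (ex_intro _ _ (lbd y))).
exists h; split; first split.
- exists (Num.max Cm 0 * Num.max B 0) => y; rewrite hnorm hh.
  apply: opnorm_le; last exact: lbd.
  by rewrite mulr_ge0 // le_max lexx orbT.
- move=> g x; apply: hinj; rewrite hact !hh; apply: funext => z; rewrite /l.
  have key q : Phi (f (gcons q (fun i => gmul grp (ginv grp g) (x i))))
                   (actF (ginv grp g) z) = Phi (f (gcons (gmul grp g q) x)) z.
    by rewrite -(finv g (gcons (gmul grp g q) x)) hact gcons_map gmulKV.
  under eq_fun do rewrite key.
  have := minv (ginv grp g) _ (fb x z); rewrite ginvK //.
- apply: funext => x; apply: hinj; apply: funext => z.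
  rewrite Phisum.
  under eq_bigr do rewrite hh.
  rewrite /l -msum //.
  have coc g : f x = \sum_(i < k.+2) ((-1) ^+ i : K) *: f (gcons g (fun j => x (lift i j))).
    have := congr1 (fun F => F (gcons g x)) fcoc; rewrite /= /coboundary.
    rewrite big_ord_recl expr0 scale1r gcons_lift0.
    rewrite (eq_bigr (fun i : 'I_k.+2 => - (((-1) ^+ i : K) *: f (gcons g (fun j => x (lift i j)))))); last first.
      by move=> i _; rewrite gcons_liftS lift0 exprS mulN1r scaleNr.
    by rewrite sumrN => /subr0_eq.
  rewrite -(mcst (Phi (f x) z)); congr m; apply: funext => g.
  by rewrite (coc g) Phisum.
Qed.
End Forward.
Section Back.
Variables (R : realType) (K : fieldType) (absK : K -> R) (hK : is_na_abs absK)
  (G : Type) (grp : group_str G).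
Local Notation e := (gone grp).
Local Notation gm := (gmul grp).
Local Notation gi := (ginv grp).

Lemma bext (f g : G -> K) : (forall x, f x = g x) -> bounded_fun absK f -> bounded_fun absK g.
Proof. by move=> h [C hC]; exists C => x; rewrite -h. Qed.
Lemma badd (f g : G -> K) : bounded_fun absK f -> bounded_fun absK g ->
  bounded_fun absK (fun x => f x + g x).
Proof. by move=> hf hg; apply: bext (bounded_lin hK 1 hf hg) => x; rewrite mul1r. Qed.
Lemma bscale a (f : G -> K) : bounded_fun absK f -> bounded_fun absK (fun x => a * f x).
Proof. by move=> hf; apply: bext (bounded_lin hK a hf (bounded_cst absK G 0)) => x; rewrite addr0. Qed.
Lemma bopp (f : G -> K) : bounded_fun absK f -> bounded_fun absK (fun x => - f x).
Proof. by move=> hf; apply: bext (bscale (-1) hf) => x; rewrite mulN1r. Qed.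
Lemma bcomp (f : G -> K) (u : G -> G) : bounded_fun absK f -> bounded_fun absK (fun x => f (u x)).
Proof. by move=> [C hC]; exists C. Qed.

Record Fsp := FSp { fv : G -> K; fv_b : bounded_fun absK fv; fv_e : fv e = 0 }.
HB.instance Definition _ := gen_eqMixin Fsp.
HB.instance Definition _ := gen_choiceMixin Fsp.

Lemma Fsp_eq (f1 f2 : Fsp) : fv f1 = fv f2 -> f1 = f2.
Proof. case: f1 f2 => [f b e0] [f' b' e'] /= ?; subst f'. by congr FSp. Qed.

Definition F0 : Fsp := @FSp (fun _ => 0) (bounded_cst absK G 0) erefl.
Definition Fadd (f1 f2 : Fsp) : Fsp :=
  @FSp (fun x => fv f1 x + fv f2 x) (badd (fv_b f1) (fv_b f2))
    ltac:(by rewrite /= !fv_e addr0).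
Definition Fopp (f : Fsp) : Fsp :=
  @FSp (fun x => - fv f x) (bopp (fv_b f)) ltac:(by rewrite /= fv_e oppr0).
Definition Fscale (a : K) (f : Fsp) : Fsp :=
  @FSp (fun x => a * fv f x) (bscale a (fv_b f)) ltac:(by rewrite /= fv_e mulr0).

Lemma FaddA : associative Fadd.
Proof. by move=> *; apply: Fsp_eq; apply: funext => x /=; rewrite addrA. Qed.
Lemma FaddC : commutative Fadd.
Proof. by move=> *; apply: Fsp_eq; apply: funext => x /=; rewrite addrC. Qed.
Lemma Fadd0 : left_id F0 Fadd.
Proof. by move=> *; apply: Fsp_eq; apply: funext => x /=; rewrite add0r. Qed.
Lemma FaddN : left_inverse F0 Fopp Fadd.
Proof. by move=> *; apply: Fsp_eq; apply: funext => x /=; rewrite addNr. Qed.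
HB.instance Definition _ := GRing.isZmodule.Build Fsp FaddA FaddC Fadd0 FaddN.
Lemma FscaleA a b v : Fscale a (Fscale b v) = Fscale (a * b) v.
Proof. by apply: Fsp_eq; apply: funext => x /=; rewrite mulrA. Qed.
Lemma Fscale1 : left_id 1 Fscale.
Proof. by move=> *; apply: Fsp_eq; apply: funext => x /=; rewrite mul1r. Qed.
Lemma FscaleDr : right_distributive Fscale Fadd.
Proof. by move=> *; apply: Fsp_eq; apply: funext => x /=; rewrite mulrDr. Qed.
Lemma FscaleDl v : {morph Fscale^~ v : a b / a + b >-> Fadd a b}.
Proof. by move=> *; apply: Fsp_eq; apply: funext => x /=; rewrite mulrDl. Qed.
HB.instance Definition _ := GRing.Zmodule_isLmodule.Build K Fsp FscaleA Fscale1 FscaleDr FscaleDl.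

Lemma fvD (f1 f2 : Fsp) x : fv (f1 + f2) x = fv f1 x + fv f2 x. Proof. by []. Qed.
Lemma fvZ a (f : Fsp) x : fv (a *: f) x = a * fv f x. Proof. by []. Qed.
Lemma fv0 x : fv (0 : Fsp) x = 0. Proof. by []. Qed.


Lemma abs_neq0 a : a != 0 -> absK a != 0.
Proof. by move=> nz; apply/eqP => /(abs_eq0 hK); apply/eqP. Qed.
Lemma absVK a : a != 0 -> absK a * absK a^-1 = 1.
Proof. by move=> nz; rewrite -(absM hK) mulfV // (abs1 hK). Qed.

Lemma sn_scale a (f : G -> K) : bounded_fun absK f ->
  supnorm absK (fun x => a * f x) = absK a * supnorm absK f.
Proof.
move=> hb; apply/le_anti/andP; split.
  apply: (sup_le e) => x; rewrite (absM hK); apply: ler_wpM2l; first exact: abs_ge0.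
  exact: sup_ub.
have [->|nz] := eqVneq a 0.
  by rewrite (abs0 hK) mul0r; apply: (sup_ge0 hK e); apply: bscale.
have h1 : supnorm absK f <= absK a^-1 * supnorm absK (fun x => a * f x).
  apply: (sup_le e) => x.
  have -> : f x = a^-1 * (a * f x) by rewrite mulrA mulVf // mul1r.
  rewrite (absM hK); apply: ler_wpM2l; first exact: abs_ge0.
  apply: (@sup_ub _ _ _ _ (fun y => a * f y) x); exact: bscale.
apply: le_trans (ler_wpM2l (abs_ge0 hK a) h1) _.
by rewrite mulrA absVK // mul1r.
Qed.

Definition nF (f : Fsp) := supnorm absK (fv f).

Lemma actF_b g (f : Fsp) : bounded_fun absK (fun x => fv f (gm (gi g) x) - fv f (gi g)).
Proof. exact: (badd (bcomp _ (fv_b f)) (bounded_cst absK G _)). Qed.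
Lemma actF_e g (f : Fsp) : (fun x => fv f (gm (gi g) x) - fv f (gi g)) e = 0.
Proof. by rewrite /= gmul1r subrr. Qed.
Definition actF g (f : Fsp) : Fsp := FSp (actF_b g f) (actF_e g f).

Lemma nF_ub (f : Fsp) x : absK (fv f x) <= nF f.
Proof. exact: (sup_ub x (fv_b f)). Qed.

Lemma Fnorm : is_na_norm absK nF.
Proof.
split.
- move=> f; exact: (sup_ge0 hK e (fv_b f)).
- move=> f; split.
    move=> h0; apply: Fsp_eq; apply: funext => x /=; apply: (abs_eq0 hK).
    by apply/le_anti; rewrite (abs_ge0 hK) -h0 nF_ub.
  move=> ->; apply/le_anti/andP; split; last exact: (sup_ge0 hK e (fv_b 0)).
  by apply: (sup_le e) => x; rewrite fv0 (abs0 hK).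
- move=> f1 f2; apply: (sup_le e) => x; rewrite fvD.
  by apply: le_trans (absD hK _ _) _; apply: maxle2; apply: nF_ub.
- by move=> a f; rewrite /nF /= sn_scale //; apply: fv_b.
Qed.

Lemma actF_comp g h (f : Fsp) : actF (gm g h) f = actF g (actF h f).
Proof.
apply: Fsp_eq; apply: funext => x /=.
rewrite ginvM gmulA; ring.
Qed.

Lemma actF1 (f : Fsp) : actF e f = f.
Proof. by apply: Fsp_eq; apply: funext => x /=; rewrite ginv1 gmul1 fv_e subr0. Qed.

Lemma actFK g (f : Fsp) : actF (gi g) (actF g f) = f.
Proof. by rewrite -actF_comp gmulV actF1. Qed.

Lemma Fmod : normed_KG_module absK grp nF actF.
Proof.
split.
- exact: Fnorm.
- by move=> g a x y; apply: Fsp_eq; apply: funext => z /=; ring.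
- move=> g f; apply/le_anti/andP; split.
    apply: (sup_le e) => x /=; apply: le_trans (absB hK _ _) _.
    by rewrite ge_max !nF_ub.
  apply: (sup_le e) => x.
  have -> : fv f x = fv (actF g f) (gm g x) - fv (actF g f) g.
    by rewrite /= gmulKV gmulV fv_e; ring.
  by apply: le_trans (absB hK _ _) _; rewrite ge_max !nF_ub.
- exact: actF1.
- exact: actF_comp.
Qed.

Lemma bf_pos (l : Fsp -> K) : bounded_functional absK nF l ->
  exists C, 0 <= C /\ forall x, absK (l x) <= C * nF x.
Proof. by move=> hb; have [C [h1 h2]] := opnorm_mem Fnorm hb; exists C. Qed.

Lemma nF_ge0' x : 0 <= nF x. Proof. exact: (nF_ge0 Fnorm). Qed.

Record Esp := ESp { ev : Fsp -> K; ev_lin : lin_functional ev;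
  ev_b : bounded_functional absK nF ev }.
HB.instance Definition _ := gen_eqMixin Esp.
HB.instance Definition _ := gen_choiceMixin Esp.

Lemma Esp_eq (l1 l2 : Esp) : ev l1 = ev l2 -> l1 = l2.
Proof. case: l1 l2 => [f b e0] [f' b' e'] /= ?; subst f'. by congr ESp. Qed.

Lemma E0_lin : lin_functional (fun _ : Fsp => (0 : K)).
Proof. by move=> *; rewrite mulr0 addr0. Qed.
Lemma E0_b : bounded_functional absK nF (fun _ : Fsp => (0 : K)).
Proof. by exists 0 => x; rewrite (abs0 hK) mul0r. Qed.
Definition E0 : Esp := ESp E0_lin E0_b.

Lemma Eadd_lin (l1 l2 : Esp) : lin_functional (fun x => ev l1 x + ev l2 x).
Proof. by move=> a x y; rewrite !ev_lin; ring. Qed.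
Lemma Eadd_b (l1 l2 : Esp) : bounded_functional absK nF (fun x => ev l1 x + ev l2 x).
Proof.
have [C1 [C10 h1]] := bf_pos (ev_b l1); have [C2 [C20 h2]] := bf_pos (ev_b l2).
exists (C1 + C2) => x; apply: le_trans (absD hK _ _) _; rewrite ge_max; apply/andP; split.
  by apply: le_trans (h1 x) _; rewrite ler_wpM2r ?nF_ge0' // lerDl.
by apply: le_trans (h2 x) _; rewrite ler_wpM2r ?nF_ge0' // lerDr.
Qed.
Definition Eadd (l1 l2 : Esp) : Esp := ESp (Eadd_lin l1 l2) (Eadd_b l1 l2).

Lemma Escale_lin a (l : Esp) : lin_functional (fun x => a * ev l x).
Proof. by move=> b x y; rewrite !ev_lin; ring. Qed.
Lemma Escale_b a (l : Esp) : bounded_functional absK nF (fun x => a * ev l x).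
Proof.
have [C [C0 h]] := bf_pos (ev_b l).
exists (absK a * C) => x; rewrite (absM hK) -mulrA; apply: ler_wpM2l => //.
exact: abs_ge0.
Qed.
Definition Escale a (l : Esp) : Esp := ESp (Escale_lin a l) (Escale_b a l).
Definition Eopp (l : Esp) : Esp := Escale (-1) l.

Lemma EaddA : associative Eadd.
Proof. by move=> *; apply: Esp_eq; apply: funext => x /=; rewrite addrA. Qed.
Lemma EaddC : commutative Eadd.
Proof. by move=> *; apply: Esp_eq; apply: funext => x /=; rewrite addrC. Qed.
Lemma Eadd0 : left_id E0 Eadd.
Proof. by move=> *; apply: Esp_eq; apply: funext => x /=; rewrite add0r. Qed.
Lemma EaddN : left_inverse E0 Eopp Eadd.
Proof. by move=> *; apply: Esp_eq; apply: funext => x /=; rewrite mulN1r addNr. Qed.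
HB.instance Definition _ := GRing.isZmodule.Build Esp EaddA EaddC Eadd0 EaddN.
Lemma EscaleA a b v : Escale a (Escale b v) = Escale (a * b) v.
Proof. by apply: Esp_eq; apply: funext => x /=; rewrite mulrA. Qed.
Lemma Escale1 : left_id 1 Escale.
Proof. by move=> *; apply: Esp_eq; apply: funext => x /=; rewrite mul1r. Qed.
Lemma EscaleDr : right_distributive Escale Eadd.
Proof. by move=> *; apply: Esp_eq; apply: funext => x /=; rewrite mulrDr. Qed.
Lemma EscaleDl v : {morph Escale^~ v : a b / a + b >-> Eadd a b}.
Proof. by move=> *; apply: Esp_eq; apply: funext => x /=; rewrite mulrDl. Qed.
HB.instance Definition _ := GRing.Zmodule_isLmodule.Build K Esp EscaleA Escale1 EscaleDr EscaleDl.

Lemma evD (l1 l2 : Esp) x : ev (l1 + l2) x = ev l1 x + ev l2 x. Proof. by []. Qed.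
Lemma evZ a (l : Esp) x : ev (a *: l) x = a * ev l x. Proof. by []. Qed.
Lemma ev0 x : ev (0 : Esp) x = 0. Proof. by []. Qed.
Lemma evN (l : Esp) x : ev (- l) x = - ev l x. Proof. by rewrite /= mulN1r. Qed.

Definition nE (l : Esp) := opnorm absK nF (ev l).

Lemma ev_ub (l : Esp) x : absK (ev l x) <= nE l * nF x.
Proof. exact: (opnorm_ub hK Fnorm x (ev_lin l) (ev_b l)). Qed.
Lemma nE_ge0 (l : Esp) : 0 <= nE l.
Proof. exact: (opnorm_ge0 Fnorm (ev_b l)). Qed.

Lemma actF_lin g a (x y : Fsp) : actF g (a *: x + y) = a *: actF g x + actF g y.
Proof. by case: Fmod => _ h _ _ _; apply: h. Qed.
Lemma actF_iso g (x : Fsp) : nF (actF g x) = nF x.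
Proof. by case: Fmod => _ _ h _ _; apply: h. Qed.

Lemma actE_lin g (l : Esp) : lin_functional (fun x => ev l (actF (gi g) x)).
Proof. by move=> a x y; rewrite actF_lin ev_lin. Qed.
Lemma actE_b g (l : Esp) : bounded_functional absK nF (fun x => ev l (actF (gi g) x)).
Proof. by have [C hC] := ev_b l; exists C => x; rewrite -(actF_iso (gi g) x). Qed.
Definition actE g (l : Esp) : Esp := ESp (actE_lin g l) (actE_b g l).

Lemma nE_le (l : Esp) D : 0 <= D -> (forall x, absK (ev l x) <= D * nF x) -> nE l <= D.
Proof. exact: opnorm_le. Qed.

Lemma Enorm : is_na_norm absK nE.
Proof.
split.
- exact: nE_ge0.
- move=> l; split.
    move=> h0; apply: Esp_eq; apply: funext => x /=; apply: (abs_eq0 hK).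
    by have := ev_ub l x; rewrite h0 mul0r => h; apply/le_anti; rewrite h (abs_ge0 hK).
  move=> ->; apply/le_anti; rewrite nE_ge0 andbT; apply: nE_le => // x.
  by rewrite ev0 (abs0 hK) mul0r.
- move=> l1 l2; apply: nE_le; first by rewrite le_max nE_ge0.
  move=> x; rewrite evD; apply: le_trans (absD hK _ _) _; rewrite ge_max; apply/andP; split.
    by apply: le_trans (ev_ub _ _) _; rewrite ler_wpM2r ?nF_ge0' // le_max lexx.
  by apply: le_trans (ev_ub _ _) _; rewrite ler_wpM2r ?nF_ge0' // le_max lexx orbT.
- move=> a l; apply/le_anti/andP; split.
    apply: nE_le; first by rewrite mulr_ge0 ?nE_ge0 ?(abs_ge0 hK).
    by move=> x; rewrite evZ (absM hK) -mulrA; apply: ler_wpM2l; [exact: abs_ge0|exact: ev_ub].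
  have [->|nz] := eqVneq a 0; first by rewrite (abs0 hK) mul0r nE_ge0.
  have h1 : nE l <= absK a^-1 * nE (a *: l).
    apply: nE_le; first by rewrite mulr_ge0 ?nE_ge0 ?(abs_ge0 hK).
    move=> x; have -> : ev l x = a^-1 * ev (a *: l) x by rewrite evZ mulrA mulVf // mul1r.
    by rewrite (absM hK) -mulrA; apply: ler_wpM2l; [exact: abs_ge0|exact: ev_ub].
  apply: le_trans (ler_wpM2l (abs_ge0 hK a) h1) _.
  by rewrite mulrA absVK // mul1r.
Qed.

Lemma actE_comp g h (l : Esp) : actE (gm g h) l = actE g (actE h l).
Proof. by apply: Esp_eq; apply: funext => x /=; rewrite ginvM actF_comp. Qed.

Lemma Emod : normed_KG_module absK grp nE actE.
Proof.
split.
- exact: Enorm.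
- by move=> g a x y; apply: Esp_eq; apply: funext => z.
- move=> g l; apply/le_anti/andP; split.
    apply: nE_le; first exact: nE_ge0.
    by move=> x /=; rewrite -(actF_iso (gi g) x); apply: ev_ub.
  apply: nE_le; first exact: nE_ge0.
  move=> x; have -> : ev l x = ev (actE g l) (actF g x) by rewrite /= actFK.
  by rewrite -(actF_iso g x); apply: ev_ub.
- by move=> l; apply: Esp_eq; apply: funext => x /=; rewrite ginv1 actF1.
- exact: actE_comp.
Qed.

Lemma Edual : dual_KG_module absK grp nE actE.
Proof.
split; first exact: Emod.
exists (Fsp : lmodType K), nF, actF, ev; split; first exact: Fmod.
split; first by move=> l; split; [exact: ev_lin|exact: ev_b].
split; first by [].
split; first exact: Esp_eq.
split; first by move=> l hl hb; exists (ESp hl hb).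
by split.
Qed.

Lemma del_lin a : lin_functional (fun f : Fsp => fv f a).
Proof. by []. Qed.
Lemma del_b a : bounded_functional absK nF (fun f : Fsp => fv f a).
Proof. by exists 1 => f; rewrite mul1r nF_ub. Qed.
Definition del a : Esp := ESp (del_lin a) (del_b a).

Definition fcoc : cochain G Esp 1 := fun x => del (x ord_max) - del (x ord0).

Lemma fcoc_b : bcochain grp nE actE fcoc.
Proof.
split.
  exists 1 => x; apply: nE_le => // f.
  rewrite mul1r evD evN /=; apply: le_trans (absB hK _ _) _.
  by rewrite ge_max !nF_ub.
move=> g x; apply: Esp_eq; apply: funext => f.
rewrite /= !mulN1r ginvK !gmulVK; ring.
Qed.

Lemma fcoc_coc : coboundary fcoc = (fun _ => 0).
Proof.
apply: funext => x; rewrite /coboundary; apply: Esp_eq; apply: funext => f.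
rewrite !big_ord_recl big_ord0 /=.
have e1 : lift ord0 (ord_max : 'I_2) = (ord_max : 'I_3) by apply: val_inj.
have e2 : lift (lift ord0 (ord0 : 'I_2)) (ord_max : 'I_2) = (ord_max : 'I_3) by apply: val_inj.
have e3 : lift (lift ord0 (ord0 : 'I_2)) (ord0 : 'I_2) = (ord0 : 'I_3) by apply: val_inj.
have e4 : lift (lift ord0 (lift ord0 (ord0 : 'I_1))) (ord_max : 'I_2) = lift ord0 (ord0 : 'I_2) by apply: val_inj.
have e5 : lift (lift ord0 (lift ord0 (ord0 : 'I_1))) (ord0 : 'I_2) = (ord0 : 'I_3) by apply: val_inj.
rewrite e1 e2 e3 e4 e5 /bump /=; ring.
Qed.

Lemma backward :
  (forall (E : lmodType K) (nE : E -> R) (actE : G -> E -> E),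
     dual_KG_module absK grp nE actE ->
     forall n : nat, (1 <= n)%N -> Hb_vanishes grp nE actE n) ->
  normed_amenable absK grp.
Proof.
move=> HV.
have /= V := HV (Esp : lmodType K) nE actE Edual 1 isT.
have := V fcoc fcoc_b fcoc_coc. case=> h [hb hcob]. case: hb => hbd hinv. 
pose H a := h (fun _ => a).
have claim1 a b (f : Fsp) : ev (H b) f - ev (H a) f = fv f b - fv f a.
  pose x := fun i : 'I_2 => if val i == 0%N then a else b.
  have := congr1 (fun F => ev (F x) f) hcob.
  rewrite /coboundary !big_ord_recl big_ord0 /=.
  have -> : (fun j : 'I_1 => x (lift ord0 j)) = (fun _ => b).
    by apply: funext => j; rewrite (ord1 j).
  have -> : (fun j : 'I_1 => x (lift (lift ord0 ord0) j)) = (fun _ => a).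
    by apply: funext => j; rewrite (ord1 j).
  rewrite /bump /x /H /= => hh; have -> : fv f b - fv f a = fv f b + -1 * fv f a by ring.
  rewrite -hh; ring.
have claim2 g (f : Fsp) : ev (H g) f = ev (H e) (actF (gi g) f).
  rewrite /H; have := hinv g (fun _ => g); rewrite gmulV => <-; by [].
pose tl (phi : G -> K) := fun x => phi x - phi e.
have tl_e phi : tl phi e = 0 by rewrite /tl subrr.
have tl_b phi : bounded_fun absK phi -> bounded_fun absK (tl phi).
  by move=> hb; apply: (badd hb (bounded_cst absK G _)).
pose m (phi : G -> K) := match pselect (bounded_fun absK phi) with
  | left hb => phi e - ev (H e) (FSp (tl_b phi hb) (tl_e phi))
  | right _ => 0 end.
have mE phi (hb : bounded_fun absK phi) a :
    m phi = phi a - ev (H a) (FSp (tl_b phi hb) (tl_e phi)).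
  rewrite /m; case: pselect => [hb'|//].
  have -> : FSp (tl_b phi hb') (tl_e phi) = FSp (tl_b phi hb) (tl_e phi) by apply: Fsp_eq.
  have c := claim1 e a (FSp (tl_b phi hb) (tl_e phi)).
  set t := FSp (tl_b phi hb) (tl_e phi) in c *.
  have -> : ev (H a) t = ev (H e) t + (fv t a - fv t e) by rewrite -c; ring.
  rewrite /= /tl; ring.
exists m; split.
- move=> a f1 f2 h1 h2.
  have hb := bounded_lin hK a h1 h2.
  rewrite (mE _ hb e) (mE _ h1 e) (mE _ h2 e).
  set t := FSp (tl_b _ hb) (tl_e _).
  have -> : t = a *: FSp (tl_b _ h1) (tl_e _) + FSp (tl_b _ h2) (tl_e _).
    by apply: Fsp_eq; apply: funext => x /=; rewrite /tl; ring.
  rewrite ev_lin /=; ring.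
- exists (1 + nE (H e)) => f hb; rewrite (mE _ hb e).
  have s0 := sup_ge0 hK e hb.
  have o0 := nE_ge0 (H e).
  apply: le_trans (absB hK _ _) _; rewrite ge_max; apply/andP; split.
    apply: le_trans (sup_ub e hb) _.
    by rewrite -{1}(mul1r (supnorm absK f)) ler_wpM2r // lerDl.
  apply: le_trans (ev_ub _ _) _.
  apply: (@le_trans _ _ (nE (H e) * supnorm absK f)).  
    apply: ler_wpM2l => //; apply: (sup_le e) => x /=; rewrite /tl.
    by apply: le_trans (absB hK _ _) _; rewrite ge_max !(sup_ub _ hb).
  by rewrite ler_wpM2r // lerDr.
- rewrite (mE _ (bounded_cst absK G 1) e).
  set t := FSp _ _.
  have -> : t = 0 by apply: Fsp_eq; apply: funext => x /=; rewrite /tl subrr.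
  by rewrite (lin0 (ev_lin (H e))) subr0.
- move=> g f hb.
  have hpsi := bcomp (gm (gi g)) hb.
  rewrite (mE _ hpsi g) (mE _ hb e) claim2 gmulV.
  congr (_ - ev _ _); apply: Fsp_eq; apply: funext => x /=; rewrite /tl.
  rewrite ginvK gmulKV gmulV gmul1r; ring.
Qed.

End Back.

Unset Implicit Arguments.
Local Close Scope classical_set_scope.

Theorem theorem1p4 (R : realType) (K : fieldType) (absK : K -> R)
  (hK : is_na_abs absK) (G : Type) (grp : group_str G) :
  normed_amenable absK grp <->
  (forall (E : lmodType K) (nE : E -> R) (actE : G -> E -> E),
     dual_KG_module absK grp nE actE ->
     forall n : nat, (1 <= n)%N -> Hb_vanishes grp nE actE n).
Proof.
split; [exact: (forward hK) | exact: (backward hK)].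
Qed.
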